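(* Let $q\ge3$ be an integer, $0\le\beta<1$, and let $\mathcal{G}$ be a family of finite graphs for which the function $\delta$ defined by $\delta(d)=\frac{2(1-\beta)}{q-1-(1-\beta)d}$ if $d\le\frac{q-1}{1-\beta}-2$ and $\delta(d)=1$ otherwise, is a contraction function. Then there exist an integer $\theta\ge2$ and a constant $C>0$ such that for every $G=(V,E)\in\mathcal{G}$ with $n=|V|$, every $v\in V$, every integer $L\ge C\log n$, and every self-avoiding walk $(v,v_1,\dots,v_{\theta L})$ in $G$, there is an index $j$ with $L<j\le\theta L$ such that $v_j$ is a low-degree vertex. Consequently, in the self-avoiding walk tree of $G$ rooted at $v$ there is a set $S$ of low-degree vertices at distance in $(L,\theta L]$ from the root such that every walk from the root of length $\theta L$ intersects $S$.
   Context: A vertex $u$ of $G$ is low-degree if $\deg_G(u)<\frac{q-1}{1-\beta}-2$, high-degree otherwise. The self-avoiding walk tree of $G$ rooted at $v$ has as nodes the self-avoiding walks in $G$ starting at $v$, the root being $(v)$ and the children of $(v,v_1,\dots,v_k)$ being its one-edge extensions $(v,v_1,\dots,v_k,v_{k+1})$; each node is identified with the last vertex of its walk. Contraction function: $\mathsf{SAW}(v,\ell)$ is the set of self-avoiding walks $(v,v_1,\dots,v_\ell)$ with $\ell$ edges from $v$; $\mathcal{E}_\delta(v,\ell)=\sum_{(v,v_1,\dots,v_\ell)\in\mathsf{SAW}(v,\ell)}\prod_{i=1}^\ell\delta(\deg_G(v_i))$; $\delta:\mathbb{N}\to\mathbb{R}^+$ is a contraction function for $\mathcal{G}$ if there are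 constants $C>0$, $0<\gamma<1$ with $\mathcal{E}_\delta(v,\ell)<n^C\gamma^\ell$ for every $G=(V,E)\in\mathcal{G}$, $n=|V|$, every vertex $v$ and every $\ell\ge1$. *)

(* Defs.v *)
From Stdlib Require Import Reals Lra Lia Arith List.
Import ListNotations.
Open Scope R_scope.

Record graph := Graph {
  gn : nat;                                   (* n = |V|, V = {0,...,n-1} *)
  gadj : nat -> nat -> bool;
  gadj_range : forall u w, gadj u w = true -> (u < gn)%nat /\ (w < gn)%nat;
  gadj_sym : forall u w, gadj u w = gadj w u;
  gadj_irrefl : forall u, gadj u u = false
}.

Definition deg (G : graph) (u : nat) : nat :=
  length (filter (gadj G u) (seq 0 (gn G))).

Fixpoint walkb (G : graph) (w : list nat) : bool :=
  match w with
  | x :: ((y :: _) as t) => gadj G x y && walkb G t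
  | _ => true
  end.

Fixpoint nodupb (w : list nat) : bool :=
  match w with
  | [] => true
  | x :: t => negb (existsb (Nat.eqb x) t) && nodupb t
  end.

Definition is_saw (G : graph) (v l : nat) (w : list nat) : Prop :=
  (v < gn G)%nat /\ hd_error w = Some v /\ length w = S l /\
  nodupb w = true /\ walkb G w = true.

Definition sawb (G : graph) (v l : nat) (w : list nat) : bool :=
  Nat.ltb v (gn G) && match w with x :: _ => Nat.eqb x v | [] => false end
  && Nat.eqb (length w) (S l) && nodupb w && walkb G w.

Fixpoint all_lists (n l : nat) : list (list nat) :=
  match l with
  | O => [[]]
  | S l' => flat_map (fun x => map (cons x) (all_lists n l')) (seq 0 n)
  end.

Definition SAW (G : graph) (v l : nat) : list (list nat) :=
  filter (sawb G v l) (map (cons v) (all_lists (gn G) l)).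

Definition E_delta (delta : nat -> R) (G : graph) (v l : nat) : R :=
  fold_right Rplus 0
    (map (fun w => fold_right Rmult 1 (map (fun u => delta (deg G u)) (tl w)))
         (SAW G v l)).

Definition contraction_function (F : graph -> Prop) (delta : nat -> R) : Prop :=
  (forall d, 0 < delta d) /\
  exists C gamma : R, 0 < C /\ 0 < gamma < 1 /\
    forall G, F G -> forall v, (v < gn G)%nat -> forall l, (1 <= l)%nat ->
      E_delta delta G v l < Rpower (INR (gn G)) C * gamma ^ l.

Definition delta_qb (q : nat) (beta : R) (d : nat) : R :=
  if Rle_dec (INR d) ((INR q - 1) / (1 - beta) - 2)
  then 2 * (1 - beta) / (INR q - 1 - (1 - beta) * INR d)
  else 1.

Definition low_degree (q : nat) (beta : R) (G : graph) (u : nat) : Prop :=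
  INR (deg G u) < (INR q - 1) / (1 - beta) - 2.

(* Main.v *)
Require Import Defs.
From Stdlib Require Import Reals List.
From Stdlib Require Import Lra Lia Arith Classical Bool.
Import ListNotations.
Open Scope R_scope.

Lemma nodupb_app a b : nodupb (a ++ b) = true -> nodupb a = true.
Proof.
  induction a as [|x a IH]; simpl; auto.
  intros H. apply andb_true_iff in H as [H1 H2].
  rewrite IH by exact H2. rewrite andb_true_r.
  rewrite existsb_app in H1. destruct (existsb (Nat.eqb x) a); simpl in *; auto.
Qed.

Lemma walkb_app G a b : walkb G (a ++ b) = true -> walkb G a = true.
Proof.
  induction a as [|x a IH]; simpl; auto.
  destruct a as [|y a']; simpl; auto.
  intros H. apply andb_true_iff in H as [H1 H2].
  rewrite H1. simpl. apply IH. exact H2.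
Qed.

Lemma walkb_range G w : walkb G w = true -> (2 <= length w)%nat ->
  forall x, In x w -> (x < gn G)%nat.
Proof.
  induction w as [|x w IH]; simpl; intros Hw Hl y Hy; [lia|].
  destruct w as [|z w']; simpl in *; [lia|].
  apply andb_true_iff in Hw as [H1 H2].
  destruct (gadj_range G x z H1) as [Hx Hz].
  destruct Hy as [<-|Hy]; auto.
  destruct w' as [|u w''].
  - destruct Hy as [<-|[]]; auto.
  - apply IH; auto; simpl; lia.
Qed.

Lemma all_lists_in n t : (forall x, In x t -> (x < n)%nat) -> In t (all_lists n (length t)).
Proof.
  induction t as [|x t IH]; simpl; intros H; auto.
  apply in_flat_map. exists x. split.
  - apply in_seq. specialize (H x (or_introl eq_refl)). lia.
  - apply in_map. apply IH. intros; apply H; auto.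
Qed.

Lemma sum_ge l x : In x l -> (forall y, In y l -> 0 <= y) -> x <= fold_right Rplus 0 l.
Proof.
  induction l as [|y l IH]; simpl; [tauto|]. intros Hx Hp.
  assert (0 <= fold_right Rplus 0 l).
  { clear IH Hx. induction l; simpl; [lra|].
    assert (0 <= a) by (apply Hp; simpl; auto).
    assert (0 <= fold_right Rplus 0 l) by (apply IHl; intros; apply Hp; simpl in *; tauto). lra. }
  destruct Hx as [<-|Hx].
  - lra.
  - assert (0 <= y) by auto. assert (x <= fold_right Rplus 0 l) by auto. lra.
Qed.

Lemma prod_ge (f : nat -> R) a s : 0 <= a -> (forall x, In x s -> a <= f x) ->
  a ^ length s <= fold_right Rmult 1 (map f s).
Proof.
  induction s as [|x s IH]; simpl; intros Ha H; [lra|].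
  apply Rmult_le_compat; auto. apply pow_le; auto.
Qed.

Lemma prod_one (f : nat -> R) s : (forall x, In x s -> f x = 1) ->
  fold_right Rmult 1 (map f s) = 1.
Proof.
  induction s as [|x s IH]; simpl; intros H; [lra|].
  rewrite H, IH; auto; lra.
Qed.

Lemma prod_app (f : nat -> R) a b : fold_right Rmult 1 (map f (a ++ b)) =
  fold_right Rmult 1 (map f a) * fold_right Rmult 1 (map f b).
Proof. induction a; simpl; [lra|]. rewrite IHa; lra. Qed.

Lemma prod_pos (f : nat -> R) s : (forall d, 0 < f d) -> 0 < fold_right Rmult 1 (map f s).
Proof. intros H; induction s; simpl; [lra|]. apply Rmult_lt_0_compat; auto. Qed.

Lemma last_firstn (w : list nat) j : (j < length w)%nat -> last (firstn (S j) w) 0%nat = nth j w 0%nat.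
Proof.
  revert j; induction w as [|x w IH]; simpl; intros j Hj; [lia|].
  destruct j as [|j].
  - simpl. reflexivity.
  - destruct w as [|y w']; simpl in *; [lia|].
    rewrite <- IH by lia. simpl. reflexivity.
Qed.

Lemma exp_pow_nat L : exp (INR L) = exp 1 ^ L.
Proof.
  induction L; [simpl; rewrite exp_0; lra|].
  rewrite S_INR, exp_plus, IHL. simpl. lra.
Qed.

Lemma delta_ge q beta d : (3 <= q)%nat -> 0 <= beta < 1 ->
  2 * (1 - beta) / (INR q - 1) <= delta_qb q beta d.
Proof.
  intros Hq Hb. assert (Hq' : 3 <= INR q) by (apply (le_INR 3 q) in Hq; simpl in Hq; lra).
  assert (Hd : 0 <= INR d) by apply pos_INR.
  unfold delta_qb. destruct (Rle_dec _ _) as [H|H].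
  - assert (Hden : 2 * (1 - beta) <= INR q - 1 - (1 - beta) * INR d).
    { apply Rmult_le_compat_l with (r := 1 - beta) in H; [|lra].
      unfold Rdiv in H. rewrite Rmult_minus_distr_l in H.
      rewrite (Rmult_comm (INR q - 1)), <- Rmult_assoc, Rinv_r, Rmult_1_l in H by lra. lra. }
    unfold Rdiv. apply Rmult_le_compat_l; [lra|].
    apply Rinv_le_contravar; [lra|].
    assert (0 <= (1 - beta) * INR d) by (apply Rmult_le_pos; lra). lra.
  - apply Rmult_le_reg_r with (INR q - 1); [lra|].
    unfold Rdiv. rewrite Rmult_assoc, Rinv_l by lra. lra.
Qed.

Lemma delta_one q beta G u : (3 <= q)%nat -> 0 <= beta < 1 ->
  ~ low_degree q beta G u -> delta_qb q beta (deg G u) = 1.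
Proof.
  intros Hq Hb Hn. unfold low_degree in Hn. unfold delta_qb.
  destruct (Rle_dec _ _) as [H|H]; [|reflexivity].
  assert (E : INR (deg G u) = (INR q - 1) / (1 - beta) - 2) by lra.
  rewrite E. replace (INR q - 1 - (1 - beta) * ((INR q - 1) / (1 - beta) - 2))
    with (2 * (1 - beta)) by (field; lra).
  field; lra.
Qed.

Lemma saw_in G v l w : is_saw G v l w -> (1 <= l)%nat -> In w (SAW G v l).
Proof.
  intros (Hv & Hh & Hl & Hnd & Hw) Hl1. unfold SAW. apply filter_In. split.
  - destruct w as [|x t]; [discriminate|]. simpl in Hh. injection Hh as ->.
    apply in_map. simpl in Hl. injection Hl as <-. apply all_lists_in.
    intros y Hy. apply (walkb_range G (v :: t)); simpl; auto. lia.
  - unfold sawb. destruct w as [|x t]; [discriminate|]. simpl in Hh. injection Hh as ->.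
    rewrite Hnd, Hw, Hl, (proj2 (Nat.ltb_lt _ _) Hv), Nat.eqb_refl, Nat.eqb_refl. reflexivity.
Qed.

Lemma saw_prefix G v l w k : is_saw G v l w -> (k <= l)%nat -> is_saw G v k (firstn (S k) w).
Proof.
  intros (Hv & Hh & Hl & Hnd & Hw) Hk.
  assert (Hs : w = firstn (S k) w ++ skipn (S k) w) by (symmetry; apply firstn_skipn).
  split; [auto|]. split.
  - destruct w; [discriminate|]. simpl. auto.
  - split; [rewrite firstn_length; lia|]. split.
    + apply (nodupb_app _ (skipn (S k) w)). rewrite <- Hs. auto.
    + apply (walkb_app G _ (skipn (S k) w)). rewrite <- Hs. auto.
Qed.

Theorem mainTheorem10 (q : nat) (beta : R) (F : graph -> Prop) :
  (3 <= q)%nat -> 0 <= beta < 1 ->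
  contraction_function F (delta_qb q beta) ->
  exists theta : nat, (2 <= theta)%nat /\
  exists C : R, 0 < C /\
  forall G : graph, F G ->
  forall v : nat, (v < gn G)%nat ->
  forall L : nat, (1 <= L)%nat -> C * ln (INR (gn G)) <= INR L ->
    (forall w : list nat, is_saw G v (theta * L) w ->
       exists j : nat, (L < j <= theta * L)%nat /\
         low_degree q beta G (nth j w 0%nat)) /\
    (exists S : list nat -> Prop,
       (forall s, S s ->
          (L < length s - 1 <= theta * L)%nat /\
          is_saw G v (length s - 1) s /\
          low_degree q beta G (last s 0%nat)) /\
       (forall w : list nat, is_saw G v (theta * L) w ->
          exists k : nat, S (firstn k w))).
Proof.
  intros Hq Hb [Hpos [C [g [HC [Hg Hbd]]]]].
  set (a := 2 * (1 - beta) / (INR q - 1)).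
  assert (Hq' : 3 <= INR q) by (apply (le_INR 3 q) in Hq; simpl in Hq; lra).
  assert (Ha : 0 < a) by (unfold a; apply Rdiv_lt_0_compat; lra).
  assert (He : 0 < a * exp (-1)) by (apply Rmult_lt_0_compat; [lra| apply exp_pos]).
  assert (Hga : Rabs g < 1) by (rewrite Rabs_right; lra).
  destruct (pow_lt_1_zero g Hga _ He) as [N HN].
  set (theta := Nat.max N 2).
  exists theta. split; [unfold theta; lia|]. exists C. split; [exact HC|].
  intros G HG v Hv L HL HCL.
  assert (P1 : forall w, is_saw G v (theta * L) w -> exists j : nat, (L < j <= theta * L)%nat /\
         low_degree q beta G (nth j w 0%nat)).
  { intros w Hw. apply NNPP. intros Hno.
    assert (Hnl : forall j, (L < j <= theta * L)%nat -> ~ low_degree q beta G (nth j w 0%nat))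
      by (intros j Hj Hlow; apply Hno; eauto).
    assert (Hthl : (1 <= theta * L)%nat) by (unfold theta; nia).
    pose proof (saw_in G v _ w Hw Hthl) as Hin.
    pose proof (Hbd G HG v Hv (theta * L)%nat Hthl) as HE.
    destruct Hw as (_ & Hh & Hl & _ & _).
    destruct w as [|x t]; [discriminate|]. simpl in Hh. injection Hh as ->.
    simpl in Hl. injection Hl as Hl.
    set (f := fun u => delta_qb q beta (deg G u)).
    assert (HT : fold_right Rmult 1 (map f t) <= E_delta (delta_qb q beta) G v (theta * L)).
    { unfold E_delta. apply sum_ge.
      - change (fold_right Rmult 1 (map f t)) with
          ((fun w => fold_right Rmult 1 (map (fun u => delta_qb q beta (deg G u)) (tl w))) (v :: t)).
        apply in_map. exact Hin.
      - intros y Hy. apply in_map_iff in Hy as [w' [<- _]]. left. apply prod_pos. auto. }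
    assert (HaL : a ^ L <= fold_right Rmult 1 (map f t)).
    { rewrite <- (firstn_skipn L t), prod_app.
      rewrite (prod_one f (skipn L t)).
      - rewrite Rmult_1_r.
        replace L with (length (firstn L t)) at 1 by (rewrite length_firstn; unfold theta in *; nia).
        apply prod_ge; [lra|]. intros; unfold f, a; apply delta_ge; auto.
      - intros y Hy. destruct (In_nth _ _ 0%nat Hy) as [i [Hi Hy']].
        rewrite length_skipn in Hi. rewrite nth_skipn in Hy'.
        unfold f. apply delta_one; auto. rewrite <- Hy'.
        apply (Hnl (S (L + i))). unfold theta in *; nia. }
    assert (Hfin : Rpower (INR (gn G)) C * g ^ (theta * L) <= a ^ L).
    { unfold Rpower.
      assert (H1 : exp (C * ln (INR (gn G))) <= exp 1 ^ L).
      { rewrite <- exp_pow_nat. destruct (Rle_lt_or_eq_dec _ _ HCL) as [H|H].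
        - left. apply exp_increasing. exact H.
        - rewrite H. lra. }
      assert (H2 : g ^ (theta * L) <= (a * exp (-1)) ^ L).
      { rewrite pow_mult. apply pow_incr. split.
        - apply pow_le; lra.
        - assert (Hth := HN theta ltac:(unfold theta; lia)).
          rewrite Rabs_right in Hth; [lra|]. apply Rle_ge, pow_le; lra. }
      assert (H3 : exp 1 ^ L * (a * exp (-1)) ^ L = a ^ L).
      { rewrite <- Rpow_mult_distr. f_equal.
        replace (exp 1 * (a * exp (-1))) with (a * (exp 1 * exp (-1))) by ring.
        rewrite <- exp_plus. replace (1 + -1) with 0 by ring. rewrite exp_0. ring. }
      rewrite <- H3. apply Rmult_le_compat; auto.
      - left; apply exp_pos.
      - apply pow_le; lra. }
    lra. }
  split; [exact P1|].
  exists (fun s => (L < length s - 1 <= theta * L)%nat /\ is_saw G v (length s - 1) s /\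
          low_degree q beta G (last s 0%nat)).
  split; [auto|].
  intros w Hw. destruct (P1 w Hw) as [j [Hj Hlow]]. exists (S j).
  pose proof Hw as (_ & _ & Hl & _ & _).
  assert (Hlen : length (firstn (S j) w) = S j) by (rewrite length_firstn; lia).
  rewrite Hlen. replace (S j - 1)%nat with j by lia.
  split; [lia|]. split.
  - apply (saw_prefix G v (theta * L)); auto. lia.
  - rewrite last_firstn by lia. exact Hlow.
Qed.
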